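(* Let $\kappa\ge3$ and $\lambda\ge0$ be integers with $\lambda\le\kappa-2$, and let $\mathcal{G}=((\gamma_i,\alpha_i,\beta_i))_{i=1}^{g+1}$ be a $(\kappa,\lambda)$-graphical sequence. For $1\le i\le g$ let $\mathfrak{R}_i=\alpha_i+2\sqrt{\beta_i\gamma_i}$. Then: (i) $\mathfrak{R}_i\ge\mathfrak{R}_1$ for all $1\le i\le g$, with equality if and only if $(\gamma_i,\alpha_i,\beta_i)\in\{(1,\lambda,\kappa-\lambda-1),(\kappa-\lambda-1,\lambda,1)\}$; (ii) for any $2\le i\le g$, if $\beta_i\ge\gamma_i$ then $\mathfrak{R}_{i-1}<\mathfrak{R}_i$; (iii) for any $2\le i\le g-1$, if $\beta_i\le\gamma_i$ then $\mathfrak{R}_{i+1}<\mathfrak{R}_i$. In particular, the sequence $(\mathfrak{R}_i)_{i=1}^g$ is unimodal, i.e. there is $1\le t\le g$ with $\mathfrak{R}_1\le\dots\le\mathfrak{R}_t$ and $\mathfrak{R}_t\ge\dots\ge\mathfrak{R}_g$.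
   Context: For integers $\kappa\ge3$, $0\le\lambda\le\kappa-2$, let $V_{\kappa,\lambda}=\{(\gamma,\alpha,\beta)\in\mathbb{N}_0^3:\beta,\gamma\ge1,\ \gamma+\alpha+\beta=\kappa,\ \alpha\ge\max\{\lambda+1-\beta,\lambda+1-\gamma\}\}$. A $(\kappa,\lambda)$-graphical sequence is a sequence $\mathcal{G}=((\gamma_i,\alpha_i,\beta_i))_{i=1}^{g+1}$ of pairwise distinct elements of $\mathbb{N}_0^3$ such that: $(\gamma_i,\alpha_i,\beta_i)\in V_{\kappa,\lambda}$ for $1\le i\le g$; $(\gamma_1,\alpha_1,\beta_1)=(1,\lambda,\kappa-\lambda-1)$; $\beta_i\ge\beta_{i+1}$ for $1\le i\le g-1$ and $\gamma_i\le\gamma_{i+1}$ for $1\le i\le g$; $\beta_{g+1}=0$ and $\gamma_{g+1}+\alpha_{g+1}=\kappa$. *)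

(* Defs.v *)
From HB Require Import structures.
From mathcomp Require Import all_boot all_order all_algebra.
Set Implicit Arguments. Unset Strict Implicit. Unset Printing Implicit Defensive.
Import Order.TTheory GRing.Theory Num.Theory.

Definition triple := (nat * nat * nat)%type.
Definition tgamma (t : triple) : nat := t.1.1.
Definition talpha (t : triple) : nat := t.1.2.
Definition tbeta  (t : triple) : nat := t.2.
Definition mktriple (c a b : nat) : triple := (c, a, b).

(* V_{kappa,lambda}; max{l+1-b, l+1-c} <= a with truncated nat subtraction
   (equivalent to the integer version since a >= 0). *)
Definition inV (kappa lambda : nat) (t : triple) : Prop :=
  [/\ 1 <= tbeta t, 1 <= tgamma t,
      tgamma t + talpha t + tbeta t = kappa,
      lambda.+1 - tbeta t <= talpha t &
      lambda.+1 - tgamma t <= talpha t]%N.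

(* A (kappa,lambda)-graphical sequence G_1, ..., G_{g+1}, given as a
   function on indices (only the values at 1..g+1 matter). *)
Definition graphical_seq (kappa lambda g : nat) (G : nat -> triple) : Prop :=
  (forall i j, 1 <= i <= g.+1 -> 1 <= j <= g.+1 -> i <> j -> G i <> G j)%N /\
      (forall i, 1 <= i <= g -> inV kappa lambda (G i))%N /\
      G 1%N = mktriple 1 lambda (kappa - lambda - 1) /\
      (forall i, 1 <= i <= g.-1 -> tbeta (G i.+1) <= tbeta (G i))%N /\
      (forall i, 1 <= i <= g -> tgamma (G i) <= tgamma (G i.+1))%N /\
      (tbeta (G g.+1) = 0 /\ tgamma (G g.+1) + talpha (G g.+1) = kappa)%N.

Definition frakR (R : rcfType) (t : triple) : R :=
  ((talpha t)%:R + 2 * Num.sqrt ((tbeta t * tgamma t)%N)%:R)%R.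

(* Main.v *)
Require Import Defs.
From HB Require Import structures.
From mathcomp Require Import all_boot all_order all_algebra.
From mathcomp Require Import zify ring lra.
Import Order.TTheory GRing.Theory Num.Theory.
Local Open Scope ring_scope.

Definition D (R : rcfType) (a e : nat) : R := (Num.sqrt (a%:R : R) - Num.sqrt (e%:R))^+2.

Lemma DC (R : rcfType) a e : D R a e = D R e a.
Proof. rewrite /D; ring. Qed.

Lemma frakR_D (R : rcfType) k t : (tgamma t + talpha t + tbeta t = k)%N ->
  frakR R t = k%:R - D R (tbeta t) (tgamma t).
Proof.
move=> <-. rewrite /frakR /D natrM sqrtrM ?ler0n // !natrD.
have h1 := sqr_sqrtr (ler0n R (tbeta t)).
have h2 := sqr_sqrtr (ler0n R (tgamma t)).
set x := Num.sqrt _ in h1 *; set y := Num.sqrt _ in h2 *.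
rewrite -h1 -h2; ring.
Qed.

Lemma sqrt_le (R : rcfType) (a b : nat) : (a <= b)%N -> Num.sqrt (a%:R : R) <= Num.sqrt b%:R.
Proof. by move=> h; rewrite ler_sqrt ?ler0n // ler_nat. Qed.

Lemma sqrt_lt (R : rcfType) (a b : nat) : (a < b)%N -> Num.sqrt (a%:R : R) < Num.sqrt b%:R.
Proof. by move=> h; rewrite ltr_sqrt ?ltr0n ?ltr_nat //; lia. Qed.

Lemma Dmono (R : rcfType) a1 a2 e1 e2 : (e1 <= e2)%N -> (e2 <= a2)%N -> (a2 <= a1)%N ->
  D R a2 e2 < D R a1 e1 \/ (a1 = a2 /\ e1 = e2).
Proof.
move=> h1 h2 h3.
have s1 := @sqrt_le R _ _ h1; have s2 := @sqrt_le R _ _ h2; have s3 := @sqrt_le R _ _ h3.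
rewrite /D.
case: (ltngtP a2 a1) => [l|l|<-]; last first.
- case: (ltngtP e1 e2) => [l|l|<-]; last by right.
  + left. have := @sqrt_lt R _ _ l. nra.
  + lia.
- lia.
- left. have := @sqrt_lt R _ _ l. nra.
Qed.

Lemma tripleE (t : triple) : t = mktriple (tgamma t) (talpha t) (tbeta t).
Proof. by case: t => [[]]. Qed.

Lemma mono_dec (f : nat -> nat) lo hi : (forall i, (lo <= i < hi)%N -> (f i.+1 <= f i)%N) ->
  forall i j, (lo <= i)%N -> (i <= j)%N -> (j <= hi)%N -> (f j <= f i)%N.
Proof.
move=> hf i j hlo; elim: j => [|j IH] hij hj.
- by have -> : i = 0%N by lia.
- case: (ltngtP i j.+1) => [l|l|<-]; last by [].
  + apply: leq_trans (IH _ _) => //; [apply: hf|]; lia.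
  + lia.
Qed.

Lemma mono_inc (f : nat -> nat) lo hi : (forall i, (lo <= i < hi)%N -> (f i <= f i.+1)%N) ->
  forall i j, (lo <= i)%N -> (i <= j)%N -> (j <= hi)%N -> (f i <= f j)%N.
Proof.
move=> hf i j hlo; elim: j => [|j IH] hij hj.
- by have -> : i = 0%N by lia.
- case: (ltngtP i j.+1) => [l|l|<-]; last by [].
  + apply: leq_trans (IH _ _) _ => //; [|apply: hf]; lia.
  + lia.
Qed.

Theorem lemma3p3 (R : rcfType) (kappa lambda g : nat) (G : nat -> triple) :
  (3 <= kappa)%N -> (lambda <= kappa - 2)%N ->
  graphical_seq kappa lambda g G ->
  let RR := fun i : nat => frakR R (G i) in
  [/\ (forall i, (1 <= i <= g)%N ->
         RR 1%N <= RR i /\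
         (RR i = RR 1%N <->
            G i = mktriple 1 lambda (kappa - lambda - 1) \/
            G i = mktriple (kappa - lambda - 1) lambda 1)),
      (forall i, (2 <= i <= g)%N -> (tgamma (G i) <= tbeta (G i))%N ->
         RR i.-1 < RR i),
      (forall i, (2 <= i <= g.-1)%N -> (tbeta (G i) <= tgamma (G i))%N ->
         RR i.+1 < RR i) &
      exists2 t, (1 <= t <= g)%N &
        (forall i, (1 <= i < t)%N -> RR i <= RR i.+1) /\
        (forall i, (t <= i < g)%N -> RR i.+1 <= RR i)].
Proof.
move=> hk hl [hdist [hV [hG1 [hb [hc [hbg hcg]]]]]] RR; subst RR.
have g1 : (1 <= g)%N.
  case: g hdist hV hb hc hbg hcg => // _ _ _ _ hbg _.
  move: hbg; rewrite hG1 /tbeta /=; lia.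
have hRR : forall i, (1 <= i <= g)%N ->
    frakR R (G i) = kappa%:R - D R (tbeta (G i)) (tgamma (G i)).
  by move=> i hi; apply: frakR_D; case: (hV i hi).
have neq : forall i, (1 <= i < g)%N -> tbeta (G i) = tbeta (G i.+1) ->
    tgamma (G i) = tgamma (G i.+1) -> False.
  move=> i hi e1 e2; apply: (hdist i i.+1); try lia.
  case: (hV i) => [|_ _ s1 _ _]; first lia.
  case: (hV i.+1) => [|_ _ s2 _ _]; first lia.
  rewrite (tripleE (G i)) (tripleE (G i.+1)) e1 e2.
  congr mktriple; lia.
have step2 : forall i, (1 <= i < g)%N -> (tgamma (G i.+1) <= tbeta (G i.+1))%N ->
    frakR R (G i) < frakR R (G i.+1).
  move=> i hi h.
  rewrite !hRR; try lia.
  have hbi := hb i; have hci := hc i.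
  case: (@Dmono R (tbeta (G i)) (tbeta (G i.+1)) (tgamma (G i)) (tgamma (G i.+1)));
    try (apply: hci; lia); try (apply: hbi; lia); try lia.
  - by move=> l; lra.
  - by case=> e1 e2; case: (neq i).
have step3 : forall i, (1 <= i < g)%N -> (tbeta (G i) <= tgamma (G i))%N ->
    frakR R (G i.+1) < frakR R (G i).
  move=> i hi h.
  rewrite !hRR; try lia.
  have hbi := hb i; have hci := hc i.
  case: (@Dmono R (tgamma (G i.+1)) (tgamma (G i)) (tbeta (G i.+1)) (tbeta (G i)));
    try (apply: hci; lia); try (apply: hbi; lia); try lia.
  - move=> l; rewrite (DC R (tbeta (G i))) (DC R (tbeta (G i.+1))); lra.
  - by case=> e1 e2; case: (neq i).
have bdec := @mono_dec (fun i => tbeta (G i)) 1%N g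
  (fun i hi => hb i ltac:(lia)).
have cinc := @mono_inc (fun i => tgamma (G i)) 1%N g
  (fun i hi => hc i ltac:(lia)).
split.
- move=> i hi.
  have R1 : frakR R (G 1%N) = kappa%:R - D R (kappa - lambda - 1) 1.
    by rewrite hRR ?hG1 //; lia.
  case: (hV i hi) => hb1 hc1 hs ha1 ha2.
  have key : D R (tbeta (G i)) (tgamma (G i)) < D R (kappa - lambda - 1) 1 \/
      G i = mktriple 1 lambda (kappa - lambda - 1) \/
      G i = mktriple (kappa - lambda - 1) lambda 1.
    case: (leqP (tgamma (G i)) (tbeta (G i))) => h.
    + case: (@Dmono R (kappa - lambda - 1) (tbeta (G i)) 1 (tgamma (G i))); try lia; try by left.
      case=> e1 e2; right; left; rewrite (tripleE (G i)) -e1 -e2; congr mktriple; lia.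
    + rewrite DC.
      case: (@Dmono R (kappa - lambda - 1) (tgamma (G i)) 1 (tbeta (G i))); try lia; try by left.
      case=> e1 e2; right; right; rewrite (tripleE (G i)) -e1 -e2; congr mktriple; lia.
  rewrite R1 hRR //.
  case: key => [l|e].
  + split; first lra.
    split; last first.
      move=> e; exfalso; move: l; case: e => ->; rewrite /tbeta /tgamma /= ?(DC R 1); lra.
    move=> e; have e2 := oppr_inj (addrI _ e); by move: l; rewrite e2 ltxx.
  + have -> : D R (tbeta (G i)) (tgamma (G i)) = D R (kappa - lambda - 1) 1.
      by case: e => ->; rewrite /tbeta /tgamma //= DC.
    by split.
- move=> i hi h.
  have := step2 i.-1 ltac:(lia).
  have -> : i.-1.+1 = i by lia.
  by apply.
- move=> i hi h; apply: step3 => //; lia.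
pose P := fun i => (1 <= i <= g)%N && (tgamma (G i) <= tbeta (G i))%N.
have P1 : exists i, P i.
  exists 1%N; rewrite /P hG1 /tgamma /tbeta /=; apply/andP; split; lia.
have Pb : forall i, P i -> (i <= g)%N by move=> i /andP[] /andP[].
case: (ex_maxnP P1 Pb) => t /andP[ht hPt] tmax.
have below : forall i, (1 <= i <= t)%N -> (tgamma (G i) <= tbeta (G i))%N.
  move=> i hi.
  have := cinc i t ltac:(lia) ltac:(lia) ltac:(lia).
  have := bdec i t ltac:(lia) ltac:(lia) ltac:(lia).
  move=> /= h1 h2; lia.
have above : forall i, (t < i <= g)%N -> (tbeta (G i) < tgamma (G i))%N.
  move=> i hi; rewrite ltnNge; apply/negP => h.
  have := tmax i; rewrite /P h andbT; move=> /(_ ltac:(apply/andP; lia)); lia.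
have inc : forall i, (1 <= i < t)%N -> frakR R (G i) <= frakR R (G i.+1).
  move=> i hi; apply: ltW; apply: step2; [lia|apply: below; lia].
have dec : forall i, (t < i < g)%N -> frakR R (G i.+1) <= frakR R (G i).
  move=> i hi; apply: ltW; apply: step3; [lia|]; apply: ltnW; apply: above; lia.
case: (ltngtP t g) => tg; last first.
- exists t; first lia.
  split => //; move=> i; lia.
- lia.
case: (lerP (frakR R (G t.+1)) (frakR R (G t))) => cmp.
- exists t; first lia.
  split => // i hi.
  case: (ltngtP t i) => c; [apply: dec; lia| lia| by rewrite -c].
- exists t.+1; first lia.
  split => i hi.
  + case: (ltngtP i t) => c; [apply: inc; lia|lia|rewrite c; exact: ltW].
  + apply: dec; lia.
Qed.
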